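(* Let $\mathbf{X}$ be a real or complex Banach space and let $\mathcal{A}(\mathbf{X})$ be a unital standard operator algebra on $\mathbf{X}$. If $\phi:\mathcal{A}(\mathbf{X})\to\mathcal{A}(\mathbf{X})$ is a linear mapping such that $\phi(A)\circ B+A\circ\phi(B)=0$ for all $A,B\in\mathcal{A}(\mathbf{X})$ with $AB=BA=0$, then there exist a derivation $\delta$ and a multiplier $\eta$ on $\mathcal{A}(\mathbf{X})$ such that $\phi=\delta+\eta$. If moreover $\phi(I)=0$, then $\phi$ is a derivation.
   Context: $\mathcal{B}(\mathbf{X})$ is the algebra of bounded linear operators on $\mathbf{X}$ and $\mathcal{F}(\mathbf{X})$ the ideal of finite rank operators. A subalgebra $\mathcal{A}(\mathbf{X})\subseteq\mathcal{B}(\mathbf{X})$ is standard if $\mathcal{F}(\mathbf{X})\subseteq\mathcal{A}(\mathbf{X})$; unital means it contains the identity $I$. $X\circ Y=XY+YX$. A linear $\delta$ is a derivation if $\delta(XY)=\delta(X)Y+X\delta(Y)$; a linear $\eta$ is a multiplier if $\eta(X)=\eta(I)X=X\eta(I)$ for all $X$. *)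

(* Defs.v *)
From Stdlib Require Import Reals List.
Open Scope R_scope.
Set Implicit Arguments.

Record ScalarField := {
  sc :> Type;
  szero : sc; sone : sc;
  sadd : sc -> sc -> sc; smul : sc -> sc -> sc; sopp : sc -> sc;
  sabs : sc -> R }.

Definition RField : ScalarField :=
  {| sc := R; szero := 0; sone := 1; sadd := Rplus; smul := Rmult;
     sopp := Ropp; sabs := Rabs |}.

(* The complex numbers a + b i, represented as pairs (a, b). *)
Definition Cpx := (R * R)%type.
Definition Cadd (z w : Cpx) : Cpx := (fst z + fst w, snd z + snd w).
Definition Cmul (z w : Cpx) : Cpx :=
  (fst z * fst w - snd z * snd w, fst z * snd w + snd z * fst w).
Definition Copp (z : Cpx) : Cpx := (- fst z, - snd z).
Definition Cabs (z : Cpx) : R := sqrt (fst z * fst z + snd z * snd z).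

Definition CField : ScalarField :=
  {| sc := Cpx; szero := (0, 0); sone := (1, 0); sadd := Cadd; smul := Cmul;
     sopp := Copp; sabs := Cabs |}.

Record BanachSpace (K : ScalarField) := {
  vec :> Type;
  vzero : vec;
  vadd : vec -> vec -> vec;
  vopp : vec -> vec;
  vscale : K -> vec -> vec;
  vnorm : vec -> R;
  vadd_assoc : forall x y z, vadd x (vadd y z) = vadd (vadd x y) z;
  vadd_comm : forall x y, vadd x y = vadd y x;
  vadd_0 : forall x, vadd vzero x = x;
  vadd_opp : forall x, vadd x (vopp x) = vzero;
  vscale_1 : forall x, vscale (sone K) x = x;
  vscale_assoc : forall a b x, vscale a (vscale b x) = vscale (smul K a b) x;
  vscale_addv : forall a x y, vscale a (vadd x y) = vadd (vscale a x) (vscale a y);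
  vscale_adds : forall a b x, vscale (sadd K a b) x = vadd (vscale a x) (vscale b x);
  vnorm_eq0 : forall x, vnorm x = 0 <-> x = vzero;
  vnorm_triangle : forall x y, vnorm (vadd x y) <= vnorm x + vnorm y;
  vnorm_scale : forall a x, vnorm (vscale a x) = sabs K a * vnorm x;
  vcomplete : forall u : nat -> vec,
    (forall eps, 0 < eps -> exists N, forall m n, (N <= m)%nat -> (N <= n)%nat ->
        vnorm (vadd (u m) (vopp (u n))) < eps) ->
    exists l, forall eps, 0 < eps -> exists N, forall n, (N <= n)%nat ->
        vnorm (vadd (u n) (vopp l)) < eps }.

Arguments vzero {K} _.
Arguments vadd {K} {_}.
Arguments vopp {K} {_}.
Arguments vscale {K} {_}.
Arguments vnorm {K} {_}.

Section Ops.
Variables (K : ScalarField) (X : BanachSpace K).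

Definition op := X -> X.
Definition op_zero : op := fun _ => vzero X.
Definition op_id : op := fun x => x.
Definition op_add (S T : op) : op := fun x => vadd (S x) (T x).
Definition op_scale (a : K) (T : op) : op := fun x => vscale a (T x).
Definition op_mul (S T : op) : op := fun x => S (T x).
Definition jordan (S T : op) : op := op_add (op_mul S T) (op_mul T S).

Definition is_linear (T : op) : Prop :=
  (forall x y, T (vadd x y) = vadd (T x) (T y)) /\
  (forall a x, T (vscale a x) = vscale a (T x)).

Definition bounded_op (T : op) : Prop :=
  is_linear T /\ exists M, forall x, vnorm (T x) <= M * vnorm x.

Fixpoint lin_comb (cs : list K) (ys : list X) : X :=
  match cs, ys with
  | c :: cs', y :: ys' => vadd (vscale c y) (lin_comb cs' ys')
  | _, _ => vzero X
  end.

Definition finite_rank_op (T : op) : Prop :=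
  bounded_op T /\
  exists ys : list X, forall x, exists cs : list K,
      length cs = length ys /\ T x = lin_comb cs ys.

Definition unital_standard_algebra (A : op -> Prop) : Prop :=
  (forall T, A T -> bounded_op T) /\
  A op_zero /\
  (forall S T, A S -> A T -> A (op_add S T)) /\
  (forall a T, A T -> A (op_scale a T)) /\
  (forall S T, A S -> A T -> A (op_mul S T)) /\
  (forall T, finite_rank_op T -> A T) /\
  A op_id.

Definition maps_into (A : op -> Prop) (f : op -> op) : Prop :=
  forall T, A T -> A (f T).

Definition linear_on (A : op -> Prop) (f : op -> op) : Prop :=
  maps_into A f /\
  (forall S T, A S -> A T -> f (op_add S T) = op_add (f S) (f T)) /\
  (forall a T, A T -> f (op_scale a T) = op_scale a (f T)).

Definition derivation_on (A : op -> Prop) (d : op -> op) : Prop :=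
  linear_on A d /\
  forall S T, A S -> A T ->
    d (op_mul S T) = op_add (op_mul (d S) T) (op_mul S (d T)).

Definition multiplier_on (A : op -> Prop) (e : op -> op) : Prop :=
  linear_on A e /\
  forall T, A T -> e T = op_mul (e op_id) T /\ e T = op_mul T (e op_id).

End Ops.

(* Main.v *)
Require Import Defs.
From Stdlib Require Import Reals List.
From Stdlib Require Import Ring Field Lra Psatz FunctionalExtensionality ClassicalEpsilon Classical.
Open Scope R_scope.
Set Implicit Arguments.

Record FF (K : ScalarField) : Prop := {
  ff_ring : ring_theory (szero K) (sone K) (sadd K) (smul K)
              (fun a b => sadd K a (sopp K b)) (sopp K) (@eq (sc K));
  ff_mulC : forall a b : K, smul K a b = smul K b a;
  ff_inv : forall a : K, a <> szero K -> exists b, smul K b a = sone K;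
  ff_two : sadd K (sone K) (sone K) <> szero K;
  ff_absN1 : sabs K (sopp K (sone K)) = 1 }.

Lemma FF_R : FF RField.
Proof.
  constructor; simpl.
  - constructor; intros; simpl; ring.
  - intros; ring.
  - intros a Ha; exists (/ a); field; auto.
  - lra.
  - rewrite Rabs_Ropp, Rabs_R1; auto.
Qed.

Lemma pair_eq (a b c d : R) : a = c -> b = d -> (a, b) = (c, d).
Proof. intros; subst; auto. Qed.

Lemma FF_C : FF CField.
Proof.
  constructor; simpl.
  - constructor; intros; simpl; unfold Cadd, Cmul, Copp;
      try (destruct x); try (destruct y); try (destruct z); simpl;
      apply pair_eq; ring.
  - intros [a b] [c d]; unfold Cmul; simpl; apply pair_eq; ring.
  - intros [a b] H.
    assert (Hn : a * a + b * b <> 0).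
    { intro E. apply H. assert (a = 0) by nra. assert (b = 0) by nra. subst; auto. }
    exists (a / (a*a+b*b), - b / (a*a+b*b)); unfold Cmul; simpl; apply pair_eq; field; auto.
  - unfold Cadd; simpl. intro E. inversion E. lra.
  - unfold Cabs, Copp; simpl. replace (_ + _) with 1 by ring. apply sqrt_1.
Qed.

Set Implicit Arguments.

Section Vec.
Variable K : ScalarField.
Hypothesis HF : FF K.
Variable X : BanachSpace K.

Add Ring Kr : (ff_ring HF).

Local Notation "0" := (szero K).
Local Notation "1" := (sone K).
Local Notation "a + b" := (sadd K a b).
Local Notation "a * b" := (smul K a b).
Local Notation "- a" := (sopp K a).

Lemma v_addr0 (x : X) : vadd x (vzero X) = x.
Proof. rewrite vadd_comm; apply vadd_0. Qed.

Lemma v_reg (a x y : X) : vadd a x = vadd a y -> x = y.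
Proof.
  intro H. rewrite <- (vadd_0 X x), <- (vadd_0 X y).
  rewrite <- (vadd_opp X a), (vadd_comm X a).
  rewrite <- !vadd_assoc, H; auto.
Qed.

Lemma vscale_0 (x : X) : vscale 0 x = vzero X.
Proof.
  apply (v_reg (vscale 0 x)). rewrite v_addr0, <- vscale_adds.
  f_equal; ring.
Qed.

Lemma vscale_x0 (a : K) : vscale a (vzero X) = vzero X.
Proof.
  rewrite <- (vscale_0 (vzero X)), vscale_assoc. f_equal; ring.
Qed.

Lemma vopp_scale (x : X) : vopp x = vscale (sopp K (sone K)) x.
Proof.
  apply (v_reg x). rewrite vadd_opp. rewrite <- (vscale_1 X x) at 1.
  rewrite <- vscale_adds. rewrite <- (vscale_0 x). f_equal; ring.
Qed.

Lemma vswap4 (a b c d : X) : vadd (vadd a b) (vadd c d) = vadd (vadd a c) (vadd b d).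
Proof.
  rewrite <- !vadd_assoc. f_equal. rewrite !vadd_assoc. f_equal. apply vadd_comm.
Qed.

(* dual number ring K x X *)
Definition D := (sc K * vec X)%type.
Definition d0 : D := (0, vzero X).
Definition d1 : D := (1, vzero X).
Definition dadd (p q : D) : D := (fst p + fst q, vadd (snd p) (snd q)).
Definition dmul (p q : D) : D :=
  (fst p * fst q, vadd (vscale (fst p) (snd q)) (vscale (fst q) (snd p))).
Definition dopp (p : D) : D := (- fst p, vopp (snd p)).
Definition dsub p q := dadd p (dopp q).

Lemma dpair (a b : K) (x y : X) : a = b -> x = y -> (a, x) = (b, y).
Proof. intros; subst; auto. Qed.

Lemma D_ring : ring_theory d0 d1 dadd dmul dsub dopp (@eq D).
Proof.
  constructor; intros; unfold d0, d1, dadd, dmul, dsub, dopp;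
    repeat match goal with p : D |- _ => destruct p end; simpl; apply dpair;
    try ring;
    repeat rewrite ?vopp_scale, ?vscale_addv, ?vscale_assoc, ?vscale_0, ?vscale_x0,
      ?vadd_0, ?v_addr0, ?vscale_1.
  - auto.
  - apply vadd_comm.
  - apply vadd_assoc.
  - auto.
  - apply vadd_comm.
  - rewrite <- vadd_assoc. f_equal; f_equal; f_equal; ring.
  - rewrite vscale_adds. apply vswap4.
  - simpl; ring.
  - simpl; auto.
  - rewrite <- vopp_scale; apply vadd_opp.
Qed.



Add Ring Dr : D_ring.

Definition emb (x : X) : D := (0, x).
Definition sce (a : K) : D := (a, vzero X).

Lemma emb_inj x y : emb x = emb y -> x = y.
Proof. unfold emb; intro H; inversion H; auto. Qed.
Lemma emb_add x y : emb (vadd x y) = dadd (emb x) (emb y).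
Proof. unfold emb, dadd; simpl; apply dpair; auto; ring. Qed.
Lemma emb_scale a x : emb (vscale a x) = dmul (sce a) (emb x).
Proof. unfold emb, dmul, sce; simpl; apply dpair; [ring|]. rewrite vscale_0, v_addr0; auto. Qed.
Lemma emb_opp x : emb (vopp x) = dopp (emb x).
Proof. unfold emb, dopp; simpl; apply dpair; auto; ring. Qed.
Lemma emb_zero : emb (vzero X) = d0.
Proof. auto. Qed.
Lemma sce_add a b : sce (a + b) = dadd (sce a) (sce b).
Proof. unfold sce, dadd; simpl; rewrite vadd_0; auto. Qed.
Lemma sce_mul a b : sce (a * b) = dmul (sce a) (sce b).
Proof. unfold sce, dmul; simpl; rewrite !vscale_x0, vadd_0; auto. Qed.
Lemma sce_opp a : sce (- a) = dopp (sce a).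
Proof. unfold sce, dopp; simpl. rewrite vopp_scale, vscale_x0; auto. Qed.
Lemma sce_one : sce 1 = d1.
Proof. auto. Qed.
Lemma sce_zero : sce 0 = d0.
Proof. auto. Qed.

End Vec.

Ltac vring_core :=
  apply emb_inj;
  repeat rewrite ?emb_add, ?emb_scale, ?emb_opp, ?emb_zero, ?sce_add, ?sce_mul,
    ?sce_opp, ?sce_one, ?sce_zero;
  try (first [assumption | exact FF_R | exact FF_C]); ring.

Section Test.
Variable K : ScalarField.
Hypothesis HF : FF K.
Variable X : BanachSpace K.
Add Ring Dr : (D_ring HF X).
Goal forall (a b : K) (x y : X), vscale (sadd K a b) (vadd x (vopp y)) =
   vadd (vscale b x) (vadd (vscale a x) (vopp (vscale (sadd K b a) y))).
Proof. intros. apply emb_inj; repeat rewrite ?emb_add, ?emb_scale, ?emb_opp, ?emb_zero, ?sce_add, ?sce_mul, ?sce_opp, ?sce_one, ?sce_zero. all: try assumption. ring. Qed.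
End Test.

Set Implicit Arguments.
Ltac vring := vring_core.

Section Core.
Variable K : ScalarField.
Hypothesis HF : FF K.
Variable X : BanachSpace K.
Add Ring Kr : (ff_ring HF).
Add Ring Dr : (D_ring HF X).

Local Notation "0" := (szero K).
Local Notation "1" := (sone K).

Lemma vtwo (s : X) : vadd s s = vzero X -> s = vzero X.
Proof.
  intro H. destruct (ff_inv HF (ff_two HF)) as [b Hb].
  replace s with (vscale b (vadd s s)).
  - rewrite H; apply vscale_x0; auto.
  - replace (vadd s s) with (vscale (sadd K 1 1) s) by vring.
    rewrite vscale_assoc, Hb, vscale_1; auto.
Qed.

Lemma v_eq_from (u v : X) : vadd u (vopp v) = vzero X -> u = v.
Proof.
  intro H. replace u with (vadd (vadd u (vopp v)) v) by vring. rewrite H. vring.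
Qed.

Lemma vscale_eq0 (a : K) (y : X) : vscale a y = vzero X -> y <> vzero X -> a = 0.
Proof.
  intros H Hy. destruct (Classical_Prop.classic (a = 0)) as [|Ha]; auto.
  destruct (ff_inv HF Ha) as [b Hb]. exfalso; apply Hy.
  rewrite <- (vscale_1 X y), <- Hb, <- vscale_assoc, H. apply vscale_x0; auto.
Qed.

Lemma norm_ge0 (x : X) : 0 <= vnorm x.
Proof.
  assert (H := vnorm_triangle X x (vopp x)).
  rewrite vadd_opp, vopp_scale, vnorm_scale, (ff_absN1 HF) in H; auto.
  assert (vnorm (vzero X) = 0%R) by (apply vnorm_eq0; auto). lra.
Qed.

Lemma LA (T : op X) (H : is_linear T) x y : T (vadd x y) = vadd (T x) (T y).
Proof. apply (proj1 H). Qed.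
Lemma LS (T : op X) (H : is_linear T) a x : T (vscale a x) = vscale a (T x).
Proof. apply (proj2 H). Qed.
Lemma L0 (T : op X) (H : is_linear T) : T (vzero X) = vzero X.
Proof.
  rewrite <- (vscale_0 HF _ (vzero X)), (LS H), !(vscale_0 HF); auto.
Qed.
Lemma LN (T : op X) (H : is_linear T) x : T (vopp x) = vopp (T x).
Proof. rewrite !(vopp_scale HF), (LS H); auto. Qed.

Definition bfun (h : X -> K) : Prop :=
  (forall x y, h (vadd x y) = sadd K (h x) (h y)) /\
  (forall a x, h (vscale a x) = smul K a (h x)) /\
  exists M, forall x, sabs K (h x) <= M * vnorm x.

Definition rank1 (y : X) (h : X -> K) : op X := fun w => vscale (h w) y.

Lemma rank1_fin y h : bfun h -> finite_rank_op (rank1 y h).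
Proof.
  intros [Ha [Hs [M HM]]]. split; [split; [split|]|].
  - intros a b; unfold rank1; rewrite Ha, vscale_adds; auto.
  - intros a b; unfold rank1; rewrite Hs, vscale_assoc; auto.
  - exists (M * vnorm y)%R. intro x; unfold rank1. rewrite vnorm_scale.
    assert (H1 := HM x). assert (H2 := norm_ge0 y).
    apply Rle_trans with (M * vnorm x * vnorm y)%R.
    + apply Rmult_le_compat_r; auto.
    + lra.
  - exists (y :: nil). intro x. exists (h x :: nil). split; auto.
    simpl. unfold rank1. rewrite v_addr0; auto.
Qed.

Variable A : op X -> Prop.
Hypothesis HA : unital_standard_algebra A.

Lemma A_lin T : A T -> is_linear T.
Proof. intro H. apply (proj1 ((proj1 HA) T H)). Qed.
Lemma A_zero : A (op_zero X).
Proof. destruct HA as (?&?&?&?&?&?&?); auto. Qed.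
Lemma A_add S T : A S -> A T -> A (op_add S T).
Proof. destruct HA as (?&?&?&?&?&?&?); auto. Qed.
Lemma A_scale a T : A T -> A (op_scale a T).
Proof. destruct HA as (?&?&?&?&?&?&?); auto. Qed.
Lemma A_mul S T : A S -> A T -> A (op_mul S T).
Proof. destruct HA as (?&?&?&?&?&?&?); auto. Qed.
Lemma A_id : A (op_id X).
Proof. destruct HA as (?&?&?&?&?&?&?); auto. Qed.
Lemma A_rank1 y h : bfun h -> A (rank1 y h).
Proof. intro H. destruct HA as (?&?&?&?&?&?&?). apply H5, rank1_fin; auto. Qed.

Lemma bfun_comp h T : bfun h -> A T -> bfun (fun w => h (T w)).
Proof.
  intros [Ha [Hs [M HM]]] HT. assert (HTb := proj1 HA T HT).
  destruct HTb as [HL [N HN]].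
  split; [|split].
  - intros; rewrite (LA HL); auto.
  - intros; rewrite (LS HL); auto.
  - exists (Rabs M * Rabs N)%R. intro x.
    apply Rle_trans with (M * vnorm (T x))%R; auto.
    assert (H1 := HN x). assert (0 <= vnorm (T x)) by apply norm_ge0.
    assert (0 <= vnorm x) by apply norm_ge0.
    apply Rle_trans with (Rabs M * vnorm (T x))%R.
    + apply Rmult_le_compat_r; auto. apply Rle_abs.
    + rewrite Rmult_assoc. apply Rmult_le_compat_l. apply Rabs_pos.
      apply Rle_trans with (N * vnorm x)%R; auto. apply Rmult_le_compat_r; auto. apply Rle_abs.
Qed.

Definition zjp (psi : op X -> op X) : Prop :=
  forall S T, A S -> A T ->
     op_mul S T = op_zero X -> op_mul T S = op_zero X ->
     op_add (jordan (psi S) T) (jordan S (psi T)) = op_zero X.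

Section Deriv.
Variable psi : op X -> op X.
Hypothesis Hpsi : linear_on A psi.
Hypothesis Hpsi0 : psi (op_id X) = op_zero X.
Hypothesis HC : zjp psi.

Lemma psiA T : A T -> A (psi T).
Proof. apply Hpsi. Qed.
Lemma psi_add S T w : A S -> A T -> psi (op_add S T) w = vadd (psi S w) (psi T w).
Proof. intros. destruct Hpsi as [_ [Hh _]]. rewrite Hh; auto. Qed.
Lemma psi_scale a T w : A T -> psi (op_scale a T) w = vscale a (psi T w).
Proof. intros. destruct Hpsi as [_ [_ Hh]]. rewrite Hh; auto. Qed.
Lemma psiL T : A T -> is_linear (psi T).
Proof. intro; apply A_lin, psiA; auto. Qed.

Lemma psi_ext S T : S = T -> psi S = psi T.
Proof. intros ->; auto. Qed.

Lemma IR (E : op X) (HE : A E) (Hid : forall w, E (E w) = E w) :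
  forall w, psi E w = vadd (psi E (E w)) (E (psi E w)).
Proof.
  intro w.
  set (Ec := op_add (op_id X) (op_scale (sopp K 1) E)).
  assert (HEc : A Ec) by (apply A_add; [apply A_id | apply A_scale; auto]).
  assert (LE := A_lin HE). assert (LP := psiL HE).
  assert (H1 : op_mul E Ec = op_zero X).
  { extensionality u; unfold op_mul, Ec, op_add, op_scale, op_id, op_zero.
    rewrite (LA LE), (LS LE), Hid. vring. }
  assert (H2 : op_mul Ec E = op_zero X).
  { extensionality u; unfold op_mul, Ec, op_add, op_scale, op_id, op_zero.
    rewrite Hid. vring. }
  assert (H := f_equal (fun F => F w) (HC HE HEc H1 H2)). simpl in H.
  assert (Hq : forall u, psi Ec u = vscale (sopp K 1) (psi E u)).
  { intro u. unfold Ec. rewrite psi_add, psi_scale, Hpsi0; auto.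
    unfold op_zero; vring. apply A_id. apply A_scale; auto. }
  unfold jordan, op_add, op_mul, op_zero in H. rewrite !Hq in H.
  unfold Ec, op_add, op_scale, op_id in H.
  rewrite (LA LP), (LS LP), (LS LE) in H.
  apply v_eq_from, vtwo. rewrite <- H. vring.
Qed.

Lemma psi_zero w : psi (op_zero X) w = vzero X.
Proof.
  assert (E : op_zero X = op_scale 0 (op_zero X)).
  { extensionality u; unfold op_scale, op_zero. rewrite vscale_0; auto. }
  rewrite E, psi_scale, vscale_0; auto. apply A_zero.
Qed.

Lemma use_eq (l r g h : X) : l = r -> vadd g (vopp h) = vadd l (vopp r) -> g = h.
Proof. intros H1 H2. apply v_eq_from. rewrite H2, H1. vring. Qed.

Lemma use_eqc (c : K) (l r g h : X) : l = r ->
  vadd g (vopp h) = vscale c (vadd l (vopp r)) -> g = h.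
Proof. intros H1 H2. apply v_eq_from. rewrite H2, H1. vring. Qed.

Lemma comb2 (p q r s : X) : p = q -> r = s -> vadd p r = vadd q s.
Proof. intros; subst; auto. Qed.
Lemma eqsc (c : K) (p q : X) : p = q -> vscale c p = vscale c q.
Proof. intros; subst; auto. Qed.

(* polarization of the idempotent identity *)
Lemma polar (E0 E1 : op X) (H0 : A E0) (H1 : A E1)
  (I0 : forall w, E0 (E0 w) = E0 w)
  (Ip : forall w, op_add E0 E1 (op_add E0 E1 w) = op_add E0 E1 w)
  (Im : forall w, op_add E0 (op_scale (sopp K 1) E1) (op_add E0 (op_scale (sopp K 1) E1) w)
                  = op_add E0 (op_scale (sopp K 1) E1) w) :
  forall w,
    vadd (psi E1 (E1 w)) (E1 (psi E1 w)) = vzero X /\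
    psi E1 w = vadd (vadd (psi E0 (E1 w)) (psi E1 (E0 w)))
                    (vadd (E0 (psi E1 w)) (E1 (psi E0 w))).
Proof.
  intro w.
  assert (Hp : A (op_add E0 E1)) by (apply A_add; auto).
  assert (Hm : A (op_add E0 (op_scale (sopp K 1) E1))) by (apply A_add; auto; apply A_scale; auto).
  assert (R0 := IR H0 I0 w). assert (Rp := IR Hp Ip w). assert (Rm := IR Hm Im w).
  assert (L0 := A_lin H0). assert (L1 := A_lin H1).
  assert (D0 := psiL H0). assert (D1 := psiL H1).
  assert (Ep : psi (op_add E0 E1) = op_add (psi E0) (psi E1)) by (apply Hpsi; auto).
  assert (Em : psi (op_add E0 (op_scale (sopp K 1) E1)) = op_add (psi E0) (op_scale (sopp K 1) (psi E1))).
  { destruct Hpsi as [_ [Ha Hs]]. rewrite Ha, Hs; auto. apply A_scale; auto. }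
  rewrite Ep in Rp. rewrite Em in Rm.
  unfold op_add, op_scale in Rp, Rm.
  repeat rewrite ?(LA D0), ?(LA D1), ?(LS D0), ?(LS D1), ?(LA L0), ?(LA L1), ?(LS L0), ?(LS L1)
    in Rp.
  repeat rewrite ?(LA D0), ?(LA D1), ?(LS D0), ?(LS D1), ?(LA L0), ?(LA L1), ?(LS L0), ?(LS L1)
    in Rm.
  split.
  - apply vtwo. apply (@use_eqc (sopp K 1) _ _ _ _ (comb2 (comb2 Rp Rm) (eqsc (sopp K (sadd K 1 1)) R0))).
    vring.
  - apply v_eq_from, vtwo. apply (@use_eqc 1 _ _ _ _ (comb2 Rp (eqsc (sopp K 1) Rm))). vring.
Qed.

Variable f : X -> K.
Hypothesis Hf : bfun f.
Variable z : X.
Hypothesis Hz : f z = 1.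

Lemma fA x y : f (vadd x y) = sadd K (f x) (f y).
Proof. apply Hf. Qed.
Lemma fS a x : f (vscale a x) = smul K a (f x).
Proof. apply Hf. Qed.
Lemma f0 : f (vzero X) = 0.
Proof. rewrite <- (vscale_0 HF _ (vzero X)), fS. ring. Qed.


Lemma one_neq0 : 1 <> 0.
Proof. intro E. apply (ff_two HF). rewrite E. ring. Qed.

Lemma s_two (a : K) : sadd K a a = 0 -> a = 0.
Proof.
  intro H. destruct (ff_inv HF (ff_two HF)) as [b Hb].
  transitivity (smul K b (sadd K a a)).
  - transitivity (smul K (smul K b (sadd K 1 1)) a); [rewrite Hb; ring | ring].
  - rewrite H; ring.
Qed.

Lemma v_ne0 v : f v = 1 -> v <> vzero X.
Proof. intros Hv E. subst v. rewrite f0 in Hv. apply one_neq0; auto. Qed.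

Lemma idem_rank1 u h : bfun h -> h u = 1 -> forall w, rank1 u h (rank1 u h w) = rank1 u h w.
Proof.
  intros [Ha [Hs _]] Hu w. unfold rank1. rewrite Hs, Hu. f_equal; ring.
Qed.

Lemma IRv v (Hv : f v = 1) u :
  psi (rank1 v f) u = vadd (vscale (f u) (psi (rank1 v f) v)) (vscale (f (psi (rank1 v f) u)) v).
Proof.
  assert (HP : A (rank1 v f)) by (apply A_rank1; auto).
  rewrite (IR HP (@idem_rank1 v f Hf Hv) u) at 1. unfold rank1 at 2 3.
  rewrite (LS (psiL HP)); auto.
Qed.

Lemma fDv v (Hv : f v = 1) : f (psi (rank1 v f) v) = 0.
Proof.
  assert (H := f_equal f (IRv Hv v)). rewrite fA, !fS, Hv in H.
  set (c := f (psi (rank1 v f) v)) in *.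
  assert (E : c = sadd K (sadd K (smul K 1 c) (smul K c 1)) (sopp K c)) by ring.
  rewrite E, <- H. ring.
Qed.

Lemma rank1_0 h : rank1 (vzero X) h = op_zero X.
Proof. extensionality u; unfold rank1, op_zero. apply vscale_x0; auto. Qed.

Lemma FY v (Hv : f v = 1) y (Hy : f y = 0) w (Hw : f w = 0) :
  psi (rank1 y f) w = vscale (f (psi (rank1 v f) w)) y.
Proof.
  destruct (Classical_Prop.classic (y = vzero X)) as [Ey|Ny].
  { subst y. rewrite rank1_0, psi_zero, vscale_x0; auto. }
  set (E0 := rank1 v f). set (E1 := rank1 y f).
  assert (H0 : A E0) by (apply A_rank1; auto).
  assert (H1 : A E1) by (apply A_rank1; auto).
  assert (Ep : op_add E0 E1 = rank1 (vadd v y) f).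
  { extensionality u; unfold E0, E1, op_add, rank1. vring. }
  assert (Em : op_add E0 (op_scale (sopp K 1) E1) = rank1 (vadd v (vscale (sopp K 1) y)) f).
  { extensionality u; unfold E0, E1, op_add, op_scale, rank1. vring. }
  assert (Ip : forall w, op_add E0 E1 (op_add E0 E1 w) = op_add E0 E1 w).
  { rewrite Ep. apply (@idem_rank1 _ f Hf); auto. rewrite fA, Hv, Hy; ring. }
  assert (Im : forall w, op_add E0 (op_scale (sopp K 1) E1) (op_add E0 (op_scale (sopp K 1) E1) w)
                  = op_add E0 (op_scale (sopp K 1) E1) w).
  { rewrite Em. apply (@idem_rank1 _ f Hf); auto. rewrite fA, fS, Hv, Hy; ring. }
  destruct (polar H0 H1 (@idem_rank1 v f Hf Hv) Ip Im w) as [T2 T1].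
  assert (E0w : forall u, E0 u = vscale (f u) v) by reflexivity.
  assert (E1w : forall u, E1 u = vscale (f u) y) by reflexivity.
  rewrite !E0w, !E1w, Hw in T1. rewrite !E1w, Hw in T2.
  rewrite (LS (psiL H1)), vscale_0 in T2; auto.
  rewrite vadd_0 in T2.
  assert (Hc := @vscale_eq0 _ _ T2 Ny). rewrite Hc in T1.
  rewrite (LS (psiL H0)), (LS (psiL H1)) in T1. rewrite T1. vring.
Qed.

Lemma FX v (Hv : f v = 1) g (Hg : bfun g) (Hgv : g v = 0) :
  psi (rank1 v g) v = vscale (sopp K (g (psi (rank1 v f) v))) v.
Proof.
  destruct Hg as [gA [gS gB]].
  destruct (Classical_Prop.classic (exists w0, g w0 <> 0)) as [[w0 Hw0]|Ng].
  2:{ assert (Z : forall u, g u = 0).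
      { intro u. destruct (Classical_Prop.classic (g u = 0)); auto. exfalso; apply Ng; eauto. }
      assert (E : rank1 v g = op_zero X).
      { extensionality u; unfold rank1, op_zero. rewrite Z. apply vscale_0; auto. }
      rewrite E, psi_zero, Z. rewrite <- (vscale_0 HF _ v). f_equal; ring. }
  set (E0 := rank1 v f). set (E1 := rank1 v g).
  assert (H0 : A E0) by (apply A_rank1; auto).
  assert (H1 : A E1) by (apply A_rank1; split; auto).
  assert (E0w : forall u, E0 u = vscale (f u) v) by reflexivity.
  assert (E1w : forall u, E1 u = vscale (g u) v) by reflexivity.
  assert (Ip : forall w, op_add E0 E1 (op_add E0 E1 w) = op_add E0 E1 w).
  { intro w. unfold op_add. rewrite !E0w, !E1w, !fA, !gA, !fS, !gS, Hv, Hgv. vring. }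
  assert (Im : forall w, op_add E0 (op_scale (sopp K 1) E1) (op_add E0 (op_scale (sopp K 1) E1) w)
                  = op_add E0 (op_scale (sopp K 1) E1) w).
  { intro w. unfold op_add, op_scale. rewrite !E0w, !E1w, !fA, !gA, !fS, !gS, Hv, Hgv. vring. }
  destruct (polar H0 H1 (@idem_rank1 v f Hf Hv) Ip Im v) as [_ T1].
  destruct (polar H0 H1 (@idem_rank1 v f Hf Hv) Ip Im w0) as [T2 _].
  rewrite !E0w, !E1w, Hv, Hgv in T1. rewrite !E1w in T2.
  rewrite (LS (psiL H0)), (LS (psiL H1)), vscale_0, vscale_1 in T1; auto.
  set (Dv := psi E0 v) in *. set (Fv := psi E1 v) in *.
  assert (C1 : vscale (sadd K (f Fv) (g Dv)) v = vzero X).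
  { apply (@use_eqc (sopp K 1) _ _ _ _ T1). vring. }
  apply vscale_eq0 in C1; [|apply v_ne0; auto].
  rewrite (LS (psiL H1)) in T2. fold Fv in T2.
  destruct (ff_inv HF Hw0) as [b Hb].
  assert (Fmu : Fv = vscale (smul K b (sopp K (g (psi E1 w0)))) v).
  { transitivity (vscale b (vscale (g w0) Fv)).
    - rewrite vscale_assoc, Hb, vscale_1; auto.
    - apply (@use_eqc b _ _ _ _ T2). vring. }
  assert (Ff : f Fv = smul K b (sopp K (g (psi E1 w0)))).
  { rewrite Fmu at 1. rewrite fS, Hv. ring. }
  rewrite Fmu, <- Ff. f_equal.
  transitivity (sadd K (sadd K (f Fv) (g Dv)) (sopp K (g Dv))); [ring|]. rewrite C1; ring.
Qed.

Lemma Fi v (Hv : f v = 1) B (HB : A B) (HBv : B v = vzero X) (HfB : forall w, f (B w) = 0) :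
  psi B v = vopp (B (psi (rank1 v f) v)).
Proof.
  set (P := rank1 v f).
  assert (HP : A P) by (apply A_rank1; auto).
  assert (Pw : forall u, P u = vscale (f u) v) by reflexivity.
  assert (LB := A_lin HB).
  assert (H1 : op_mul P B = op_zero X).
  { extensionality u; unfold op_mul, op_zero. rewrite Pw, HfB. apply vscale_0; auto. }
  assert (H2 : op_mul B P = op_zero X).
  { extensionality u; unfold op_mul, op_zero. rewrite Pw, (LS LB), HBv. apply vscale_x0; auto. }
  assert (H := f_equal (fun F => F v) (HC HP HB H1 H2)). simpl in H.
  unfold jordan, op_add, op_mul, op_zero in H.
  rewrite HBv, (L0 (psiL HP)), !Pw, Hv, vscale_1 in H.
  assert (Hf1 := f_equal f H). rewrite !fA, fS, f0, HfB, Hv in Hf1.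
  assert (Z : f (psi B v) = 0).
  { apply s_two. rewrite <- Hf1. ring. }
  rewrite Z in H. apply (@use_eqc 1 _ _ _ _ H). vring.
Qed.


Lemma StepA_idem v (Hv : f v = 1) T (HT : A T) w :
  psi (op_mul T (rank1 v f)) w =
  vadd (vscale (f w) (psi T v)) (T (psi (rank1 v f) w)).
Proof.
  set (P := rank1 v f).
  assert (HP : A P) by (apply A_rank1; auto).
  assert (Pw : forall u, P u = vscale (f u) v) by reflexivity.
  assert (LT := A_lin HT).
  set (a := f (T v)).
  set (y := vadd (T v) (vscale (sopp K a) v)).
  assert (Hy : f y = 0) by (unfold y; rewrite fA, fS, Hv; fold a; ring).
  set (T' := op_add T (op_scale (sopp K a) (op_id X))).
  assert (HT' : A T') by (apply A_add; auto; apply A_scale, A_id).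
  set (g := fun u => f (T' u)).
  assert (Hg : bfun g) by exact (bfun_comp Hf HT').
  assert (Hgv : g v = 0).
  { unfold g, T', op_add, op_scale, op_id. rewrite fA, fS, Hv. fold a; ring. }
  set (Y := rank1 y f). set (Xg := rank1 v g).
  assert (HY : A Y) by (apply A_rank1; auto).
  assert (HX : A Xg) by (apply A_rank1; auto).
  set (B := op_add T (op_scale (sopp K 1) (op_add (op_scale a P) (op_add Y Xg)))).
  assert (HB : A B).
  { apply A_add; auto. apply A_scale. apply A_add. apply A_scale; auto. apply A_add; auto. }
  assert (Bw : forall u, B u = vadd (T u) (vscale (sopp K 1)
      (vadd (vscale a (vscale (f u) v)) (vadd (vscale (f u) y) (vscale (g u) v))))) by reflexivity.
  assert (HBv : B v = vzero X).
  { rewrite Bw, Hv, Hgv. unfold y. vring. }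
  assert (HfB : forall u, f (B u) = 0).
  { intro u. rewrite Bw. unfold g, T', op_add, op_scale, op_id.
    repeat rewrite ?fA, ?fS. rewrite Hv, Hy. ring. }
  assert (HTdec : T = op_add (op_scale a P) (op_add Y (op_add Xg B))).
  { extensionality u. unfold op_add, op_scale. rewrite Bw, Pw. unfold Y, Xg, rank1. vring. }
  assert (HTP : op_mul T P = op_add (op_scale a P) Y).
  { extensionality u. unfold op_mul, op_add, op_scale. rewrite !Pw, (LS LT). unfold Y, rank1, y.
    fold a. vring. }
  set (D := psi P).
  assert (LD : is_linear D) by (apply psiL; auto).
  assert (LY := psiL HY).
  assert (Dv0 : f (D v) = 0) by (apply fDv; auto).
  assert (ETv : T v = vadd (vscale a v) y) by (unfold y; vring).
  assert (ETDv : T (D v) = vadd (vscale (g (D v)) v) (B (D v))).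
  { rewrite (f_equal (fun F => F (D v)) HTdec). unfold op_add, op_scale. rewrite Pw, Dv0. unfold Y, Xg, rank1.
    rewrite Dv0. vring. }
  assert (EpsiT : psi T v = vadd (vscale a (D v)) (vadd (psi Y v) (vadd (psi Xg v) (psi B v)))).
  { rewrite (f_equal (fun F => psi F v) HTdec). rewrite psi_add, psi_scale, psi_add, psi_add; auto.
    all: repeat (first [apply A_add | apply A_scale]; auto). }
  assert (EX : psi Xg v = vscale (sopp K (g (D v))) v) by (apply FX; auto).
  assert (EB : psi B v = vopp (B (D v))) by (apply Fi; auto).
  set (c := f (D w)).
  assert (EDw : D w = vadd (vscale (f w) (D v)) (vscale c v)) by (apply IRv; auto).
  set (w' := vadd w (vscale (sopp K (f w)) v)).
  assert (Hw' : f w' = 0) by (unfold w'; rewrite fA, fS, Hv; ring).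
  assert (Ew : w = vadd (vscale (f w) v) w') by (unfold w'; vring).
  assert (EYw' : psi Y w' = vscale (f (D w')) y) by (apply (FY Hv); auto).
  assert (EDw' : f (D w') = c).
  { unfold w'. rewrite (LA LD), (LS LD), fA, fS, Dv0. fold c. ring. }
  assert (EYw : psi Y w = vadd (vscale (f w) (psi Y v)) (vscale c y)).
  { rewrite Ew at 1. rewrite (LA LY), (LS LY), EYw', EDw'. auto. }
  rewrite HTP, psi_add, psi_scale; auto; try (apply A_scale; auto).
  fold D. rewrite EYw, EDw, (LA LT), !(LS LT), ETDv, ETv, EpsiT, EX, EB.
  vring.
Qed.

Lemma StepA y T (HT : A T) w :
  psi (op_mul T (rank1 y f)) w =
  vadd (vscale (f w) (psi T y)) (T (psi (rank1 y f) w)).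
Proof.
  set (s := sadd K 1 (sopp K (f y))).
  set (v1 := vadd y (vscale s z)).
  assert (Hv1 : f v1 = 1) by (unfold v1, s; rewrite fA, fS, Hz; ring).
  assert (LT := A_lin HT).
  assert (H1 : A (rank1 v1 f)) by (apply A_rank1; auto).
  assert (H2 : A (rank1 z f)) by (apply A_rank1; auto).
  assert (HR : rank1 y f = op_add (rank1 v1 f) (op_scale (sopp K s) (rank1 z f))).
  { extensionality u. unfold op_add, op_scale, rank1, v1. vring. }
  assert (HTR : op_mul T (op_add (rank1 v1 f) (op_scale (sopp K s) (rank1 z f))) =
                op_add (op_mul T (rank1 v1 f)) (op_scale (sopp K s) (op_mul T (rank1 z f)))).
  { extensionality u. unfold op_mul, op_add, op_scale. rewrite (LA LT), (LS LT); auto. }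
  assert (Hy : psi T y = vadd (psi T v1) (vscale (sopp K s) (psi T z))).
  { rewrite <- (LS (psiL HT)), <- (LA (psiL HT)). f_equal. unfold v1. vring. }
  rewrite Hy, HR, HTR.
  rewrite !psi_add, !psi_scale; auto;
    try (apply A_mul; auto); try (apply A_scale; auto); try (apply A_mul; auto).
  rewrite !StepA_idem; auto.
  rewrite (LA LT), (LS LT). vring.
all: apply A_id.
Qed.

Lemma psi_deriv S T (HS : A S) (HT : A T) :
  psi (op_mul S T) = op_add (op_mul (psi S) T) (op_mul S (psi T)).
Proof.
  extensionality y. unfold op_add, op_mul at 2 3.
  assert (LS_ := A_lin HS). assert (LT := A_lin HT).
  assert (A1 := StepA y (A_mul HS HT) z).
  assert (A2 := StepA (T y) HS z).
  assert (A3 := StepA y HT z).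
  assert (HE1 : op_mul (op_mul S T) (rank1 y f) = op_mul S (rank1 (T y) f)).
  { extensionality u. unfold op_mul, rank1. rewrite (LS LT); auto. }
  assert (HE2 : op_mul T (rank1 y f) = rank1 (T y) f).
  { extensionality u. unfold op_mul, rank1. rewrite (LS LT); auto. }
  rewrite HE1 in A1. rewrite HE2 in A3. rewrite A3 in A2. rewrite A2 in A1.
  rewrite Hz in A1. unfold op_mul at 2 in A1.
  rewrite (LA LS_), !vscale_1 in A1.
  symmetry in A1. apply (@use_eqc 1 _ _ _ _ A1). vring.
Qed.

Lemma psi_derivation : derivation_on A psi.
Proof. split; auto. intros; apply psi_deriv; auto. Qed.

End Deriv.

Section Main.
Variable phi : op X -> op X.
Hypothesis Hphi : linear_on A phi.
Hypothesis Hz0 : zjp phi.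
Variable f : X -> K.
Hypothesis Hf : bfun f.
Variable z : X.
Hypothesis Hz : f z = 1.

Let fA x y : f (vadd x y) = sadd K (f x) (f y).
Proof. apply Hf. Qed.
Let fS a x : f (vscale a x) = smul K a (f x).
Proof. apply Hf. Qed.

Let c := phi (op_id X).
Let Hc : A c.
Proof. apply Hphi, A_id. Qed.
Let Lc : is_linear c.
Proof. apply A_lin, Hc. Qed.

Lemma phi_add S T w : A S -> A T -> phi (op_add S T) w = vadd (phi S w) (phi T w).
Proof. intros. destruct Hphi as [_ [Hh _]]. rewrite Hh; auto. Qed.
Lemma phi_scale a T w : A T -> phi (op_scale a T) w = vscale a (phi T w).
Proof. intros. destruct Hphi as [_ [_ Hh]]. rewrite Hh; auto. Qed.

Lemma c_facts v (Hv : f v = 1) :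
  c v = vscale (f (c v)) v /\ forall w, f w = 0 -> f (c w) = 0.
Proof.
  set (P := rank1 v f).
  assert (HP : A P) by (apply A_rank1; auto).
  assert (Pw : forall u, P u = vscale (f u) v) by reflexivity.
  set (Q := op_add (op_id X) (op_scale (sopp K 1) P)).
  assert (HQ : A Q) by (apply A_add; [apply A_id | apply A_scale; auto]).
  assert (Qw : forall u, Q u = vadd u (vscale (sopp K 1) (vscale (f u) v))) by reflexivity.
  assert (LP := A_lin HP). assert (LD := A_lin (proj1 Hphi _ HP)).
  assert (H1 : op_mul P Q = op_zero X).
  { extensionality u; unfold op_mul, op_zero. rewrite Pw, Qw.
    repeat rewrite ?fA, ?fS. rewrite Hv. rewrite <- (vscale_0 HF _ v). f_equal; ring. }
  assert (H2 : op_mul Q P = op_zero X).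
  { extensionality u; unfold op_mul, op_zero. rewrite Pw, Qw.
    repeat rewrite ?fA, ?fS. rewrite Hv. vring. }
  assert (EQ : forall u, phi Q u = vadd (c u) (vscale (sopp K 1) (phi P u))).
  { intro u. unfold Q. rewrite phi_add, phi_scale; auto. apply A_id. apply A_scale; auto. }
  assert (Hgen : forall w, vadd (vadd (phi P (Q w)) (Q (phi P w)))
                        (vadd (P (phi Q w)) (phi Q (P w))) = vzero X).
  { intro w. exact (f_equal (fun F => F w) (Hz0 HP HQ H1 H2)). }
  assert (Hw : forall w, vadd (vadd (vadd (phi P w) (vscale (sopp K 1) (vscale (f w) (phi P v))))
                (vadd (phi P w) (vscale (sopp K 1) (vscale (f (phi P w)) v))))
           (vadd (vscale (sadd K (f (c w)) (smul K (sopp K 1) (f (phi P w)))) v)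
                 (vscale (f w) (vadd (c v) (vscale (sopp K 1) (phi P v))))) = vzero X).
  { intro w. rewrite <- (Hgen w). rewrite !EQ, !Qw, !Pw.
    repeat rewrite ?(LA LD), ?(LS LD), ?(LA Lc), ?(LS Lc). repeat rewrite ?fA, ?fS. vring. }
  split.
  - assert (H := Hw v). rewrite Hv in H.
    assert (Ecv : c v = vscale (sadd K (sadd K (f (phi P v)) (f (phi P v))) (sopp K (f (c v)))) v).
    { apply (@use_eqc 1 _ _ _ _ H). vring. }
    assert (G2 := f_equal f Ecv). rewrite fS, Hv in G2.
    rewrite Ecv at 1. f_equal. symmetry. etransitivity; [exact G2|]. ring.
  - intros w Hw0. assert (H := f_equal f (Hw w)).
    repeat rewrite ?fA, ?fS in H. rewrite (f0 Hf), Hv, Hw0 in H.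
    ring_simplify in H. exact H.
Qed.



Let lam := f (c z).

Lemma c_scalar x : c x = vscale lam x.
Proof.
  destruct (c_facts Hz) as [Cz Nz].
  set (u := vadd x (vscale (sopp K (f x)) z)).
  assert (Hu : f u = 0) by (unfold u; rewrite fA, fS, Hz; ring).
  set (v := vadd u z).
  assert (Hv : f v = 1) by (unfold v; rewrite fA, Hu, Hz; ring).
  destruct (c_facts Hv) as [Cv _].
  assert (Fv : f (c v) = lam).
  { unfold v. rewrite (LA Lc), fA, (Nz u Hu). unfold lam. ring. }
  rewrite Fv in Cv. fold lam in Cz.
  assert (Ex : x = vadd v (vscale (sadd K (f x) (sopp K 1)) z)) by (unfold v, u; vring).
  transitivity (c (vadd v (vscale (sadd K (f x) (sopp K 1)) z))); [f_equal; exact Ex|].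
  rewrite (LA Lc), (LS Lc), Cv, Cz. unfold v, u. vring.
Qed.

Definition psi0 (T : op X) : op X := op_add (phi T) (op_scale (sopp K lam) T).

Lemma psi0_lin : linear_on A psi0.
Proof.
  split; [|split].
  - intros T HT. unfold psi0. apply A_add. apply Hphi; auto. apply A_scale; auto.
  - intros S T HS HT. unfold psi0. extensionality w. unfold op_add at 1 3 4 5 6.
    rewrite phi_add; auto. unfold op_scale, op_add. vring.
  - intros a T HT. unfold psi0. extensionality w. unfold op_add.
    rewrite phi_scale; auto. unfold op_scale. vring.
Qed.

Lemma psi0_I : psi0 (op_id X) = op_zero X.
Proof.
  extensionality w. unfold psi0, op_add, op_scale, op_zero. fold c. rewrite c_scalar.
  unfold op_id. vring.
Qed.

Lemma psi0_zjp : zjp psi0.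
Proof.
  intros S T HS HT H1 H2.
  assert (E := f_equal (fun F => F) (Hz0 HS HT H1 H2)).
  extensionality w. assert (E0 := f_equal (fun F => F w) E). simpl in E0.
  assert (h1 : forall u, S (T u) = vzero X) by (intro u; exact (f_equal (fun F => F u) H1)).
  assert (h2 : forall u, T (S u) = vzero X) by (intro u; exact (f_equal (fun F => F u) H2)).
  assert (LS_ := A_lin HS). assert (LT := A_lin HT).
  unfold jordan, psi0, op_add, op_mul, op_scale, op_zero in *.
  rewrite (LA LS_), (LA LT), (LS LS_), (LS LT), !h1, !h2.
  apply (@use_eqc 1 _ _ _ _ E0). vring.
Qed.

Theorem main_generic :
  (exists delta eta : op X -> op X,
     derivation_on A delta /\ multiplier_on A eta /\
     forall T, A T -> phi T = op_add (delta T) (eta T)) /\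
  (phi (op_id X) = op_zero X -> derivation_on A phi).
Proof.
  assert (Dpsi : derivation_on A psi0).
  { eapply psi_derivation. apply psi0_lin. apply psi0_I. apply psi0_zjp. apply Hf. apply Hz. }
  split.
  - exists psi0, (fun T => op_scale lam T). split; [auto|split].
    + split; [split; [|split]|].
      * intros T HT; apply A_scale; auto.
      * intros S T HS HT. extensionality w. unfold op_scale, op_add. vring.
      * intros a T HT. extensionality w. unfold op_scale. vring.
      * intros T HT. split; [reflexivity|]. extensionality w. unfold op_mul, op_scale, op_id.
        rewrite (LS (A_lin HT)); auto.
    + intros T HT. extensionality w. unfold psi0, op_add, op_scale. vring.
  - intro H0. assert (Hl : lam = 0).
    { unfold lam, c. rewrite H0. unfold op_zero. apply (f0 Hf). }
    assert (E : psi0 = phi).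
    { extensionality T. extensionality w. unfold psi0, op_add, op_scale. rewrite Hl. vring. }
    rewrite <- E; auto.
Qed.
End Main.
End Core.

From mathcomp Require classical_sets boolp.
Set Implicit Arguments.
Open Scope R_scope.

Ltac rf t := match t with
 | Rplus ?a ?b => let a' := rf a in let b' := rf b in constr:(sadd RField a' b')
 | Rmult ?a ?b => let a' := rf a in let b' := rf b in constr:(smul RField a' b')
 | Ropp ?a => let a' := rf a in constr:(sopp RField a')
 | Rminus ?a ?b => let a' := rf a in let b' := rf b in constr:(sadd RField a' (sopp RField b'))
 | IZR (Zneg ?p) => constr:(sopp RField (IZR (Zpos p)))
 | _ => t end.
Ltac rfold := repeat match goal with |- context [@vscale RField ?X ?a ?x] =>
   let a' := rf a in progress change a with a' end.
Ltac vringR := rfold; vring.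

Section HB.
Variable X : BanachSpace RField.
Add Ring Dr : (D_ring FF_R X).
Local Notation "a ** x" := (@vscale RField X a x) (at level 40).

Lemma sc_eq (a b : RField) (x : X) : a = b -> vscale a x = vscale b x.
Proof. intros ->; auto. Qed.

Lemma nrm_scale (a : RField) (x : X) : vnorm (vscale a x) = Rabs a * vnorm x.
Proof. apply (vnorm_scale X). Qed.

Lemma nrm0 : vnorm (vzero X) = 0.
Proof. apply vnorm_eq0; auto. Qed.

Lemma nrm_ge0 (x : X) : 0 <= vnorm x.
Proof. apply (norm_ge0 FF_R). Qed.

Lemma nrm_tri (x y : X) : vnorm (vadd x y) <= vnorm x + vnorm y.
Proof. apply vnorm_triangle. Qed.

Variable z : X.
Hypothesis Hz : z <> vzero X.

Record good (G : X -> R -> Prop) : Prop := {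
  gfun : forall x r s, G x r -> G x s -> r = s;
  gadd : forall x y r s, G x r -> G y s -> G (vadd x y) (r + s);
  gsc : forall a x r, G x r -> G (vscale a x) (a * r);
  gdom : forall x r, G x r -> r <= vnorm x;
  gz : G z (vnorm z) }.

Lemma good0 G : good G -> G (vzero X) 0.
Proof.
  intro H. assert (E := gsc H 0 z _ (gz H)).
  replace (0 * vnorm z) with 0 in E by ring. rewrite (vscale_0 FF_R) in E. exact E.
Qed.

Definition G0 (x : X) (r : R) : Prop := exists a, x = vscale a z /\ r = a * vnorm z.

Lemma nz_pos : 0 < vnorm z.
Proof.
  destruct (nrm_ge0 z) as [|E]; auto. exfalso; apply Hz. apply vnorm_eq0; auto.
Qed.

Lemma good_G0 : good G0.
Proof.
  assert (P := nz_pos).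
  constructor.
  - intros x r s [a [-> ->]] [b [E ->]].
    assert (E2 : @vscale RField X (sadd RField a (sopp RField b)) z = vzero X).
    { transitivity (vadd (vscale a z) (vopp (vscale b z))); [vring|]. rewrite E; apply vadd_opp. }
    simpl in E2.
    assert (E3 := f_equal vnorm E2). rewrite nrm_scale, nrm0 in E3.
    assert (H : Rabs (a + - b) = 0). { apply Rmult_eq_reg_r with (vnorm z). simpl in E3. rewrite E3; ring. lra. }
    assert (a = b). { destruct (Rcase_abs (a + - b)); [rewrite Rabs_left in H|rewrite Rabs_right in H]; lra. }
    subst; auto.
  - intros x y r s [a [-> ->]] [b [-> ->]]. exists (a + b). split; [|ring].
    rewrite (vscale_adds X). auto.
  - intros c x r [a [-> ->]]. exists (c * a). split; [|ring]. rewrite vscale_assoc; auto.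
  - intros x r [a [-> ->]]. rewrite nrm_scale. apply Rmult_le_compat_r; [lra|apply Rle_abs].
  - exists 1. split; [rewrite vscale_1; auto | ring].
Qed.


Lemma key G (HG : good G) y x0 r0 x1 r1 : G x0 r0 -> G x1 r1 ->
  r0 - vnorm (vadd x0 (vopp y)) <= vnorm (vadd x1 y) - r1.
Proof.
  intros H0 H1. assert (A := gdom HG _ _ (gadd HG _ _ _ _ H0 H1)).
  assert (E : vadd x0 x1 = vadd (vadd x0 (vopp y)) (vadd x1 y)) by vring.
  rewrite E in A. assert (T := nrm_tri (vadd x0 (vopp y)) (vadd x1 y)). lra.
Qed.

Lemma extend G (HG : good G) y (Hy : forall r, ~ G y r) :
  exists G', good G' /\ (forall x r, G x r -> G' x r) /\ exists r, G' y r.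
Proof.
  set (S := fun q => exists x0 r0, G x0 r0 /\ q = r0 - vnorm (vadd x0 (vopp y))).
  assert (G00 := good0 HG).
  assert (Sb : bound S).
  { exists (vnorm (vadd (vzero X) y) - 0). intros q [x0 [r0 [H ->]]]. apply (key HG y _ _ _ _ H G00). }
  assert (Sne : exists q, S q) by (exists (0 - vnorm (vadd (vzero X) (vopp y))); exists (vzero X), 0; auto).
  destruct (completeness S Sb Sne) as [c [Hub Hlub]].
  assert (Cup : forall x0 r0, G x0 r0 -> r0 - vnorm (vadd x0 (vopp y)) <= c).
  { intros x0 r0 H. apply Hub. exists x0, r0; auto. }
  assert (Clo : forall x1 r1, G x1 r1 -> c <= vnorm (vadd x1 y) - r1).
  { intros x1 r1 H. apply Hlub. intros q [x0 [r0 [H0 ->]]]. apply (key HG y _ _ _ _ H0 H). }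
  set (G' := fun x r => exists x0 r0 (a : R), G x0 r0 /\ x = vadd x0 (a ** y) /\ r = r0 + a * c).
  exists G'. split; [|split].
  - constructor.
    + intros x r s [x0 [r0 [a [H0 [-> ->]]]]] [x1 [r1 [b [H1 [E ->]]]]].
      destruct (Req_dec a b) as [<-|Nab].
      * assert (x0 = x1). { apply (v_reg X (a ** y)). rewrite !(vadd_comm X (a ** y)). auto. }
        subst x1. rewrite (gfun HG _ _ _ H0 H1). auto.
      * exfalso. apply (Hy ((/ (a + - b)) * (r1 + -1 * r0))).
        assert (Ey : @vscale RField X (a + - b) y = vadd x1 (@vscale RField X (-1) x0)).
        { rewrite (vscale_adds X). apply (@use_eqc RField FF_R X 1 _ _ _ _ E).
          vringR. }
        assert (G1 := gadd HG _ _ _ _ H1 (gsc HG (-1) _ _ H0)).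
        assert (G2 := gsc HG (/ (a + - b)) _ _ G1).
        rewrite <- Ey, vscale_assoc in G2.
        replace (smul RField (/ (a + - b)) (a + - b)) with (sone RField) in G2
          by (simpl; field; lra).
        rewrite vscale_1 in G2. exact G2.
    + intros x x' r s [x0 [r0 [a [H0 [-> ->]]]]] [x1 [r1 [b [H1 [-> ->]]]]].
      exists (vadd x0 x1), (r0 + r1), (a + b). split; [apply (gadd HG); auto|split; [vringR|ring]].
    + intros k x r [x0 [r0 [a [H0 [-> ->]]]]].
      exists (k ** x0), (k * r0), (k * a). split; [apply (gsc HG); auto|split; [vringR|ring]].
    + intros x r [x0 [r0 [a [H0 [-> ->]]]]].
      destruct (Rtotal_order a 0) as [Hn|[Ha0|Hp]].
      * set (t := - a). set (k := / t).
        assert (ht : 0 < t) by (unfold t; lra).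
        assert (hk : t * k = 1) by (unfold k; field; lra).
        assert (Gk := gsc HG k _ _ H0). assert (C1 := Cup _ _ Gk).
        assert (Ev : vadd x0 (a ** y) = t ** (vadd (k ** x0) (vopp y))).
        { rewrite (vscale_addv X), vscale_assoc.
          replace (smul RField t k) with (sone RField) by (simpl; rewrite hk; auto).
          rewrite vscale_1. unfold t. vringR. }
        rewrite Ev, nrm_scale, Rabs_pos_eq by lra.
        set (N := vnorm (vadd (k ** x0) (vopp y))) in *.
        assert (h : t * (k * r0 - N) <= t * c) by (apply Rmult_le_compat_l; lra).
        replace (t * (k * r0 - N)) with (r0 - t * N) in h
          by (rewrite Rmult_minus_distr_l, <- Rmult_assoc, hk; ring).
        replace a with (- t) by (unfold t; ring). lra.
      * subst a. replace (0 ** y) with (vzero X) by (symmetry; apply (vscale_0 FF_R)).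
        rewrite v_addr0. assert (h := gdom HG _ _ H0). lra.
      * set (k := / a).
        assert (hk : a * k = 1) by (unfold k; field; lra).
        assert (Gk := gsc HG k _ _ H0). assert (C1 := Clo _ _ Gk).
        assert (Ev : vadd x0 (a ** y) = a ** (vadd (k ** x0) y)).
        { rewrite (vscale_addv X), vscale_assoc.
          replace (smul RField a k) with (sone RField) by (simpl; rewrite hk; auto).
          rewrite vscale_1. auto. }
        rewrite Ev, nrm_scale, Rabs_pos_eq by lra.
        set (N := vnorm (vadd (k ** x0) y)) in *.
        assert (h : a * c <= a * (N - k * r0)) by (apply Rmult_le_compat_l; lra).
        replace (a * (N - k * r0)) with (a * N - r0) in h
          by (rewrite Rmult_minus_distr_l, <- Rmult_assoc, hk; ring).
        lra.
    + exists z, (vnorm z), 0. split; [apply (gz HG)|split; [vringR|ring]].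
  - intros x r H. exists x, r, 0. split; auto. split; [vringR|ring].
  - exists c, (vzero X), 0, 1. split; auto. split; [vringR|ring].
Qed.


Lemma ab_intro (P : Prop) : P -> boolp.asbool P = true.
Proof. intro H. destruct (boolp.asboolP P); auto. Qed.
Lemma ab_elim (P : Prop) : boolp.asbool P = true -> P.
Proof. intro H. destruct (boolp.asboolP P); auto. discriminate. Qed.

Definition GT := {G : X -> R -> Prop | good G}.
Definition Rg (s t : GT) : bool :=
  boolp.asbool (forall x r, proj1_sig s x r -> proj1_sig t x r).

Lemma max_graph : exists G, good G /\
  forall G', good G' -> (forall x r, G x r -> G' x r) -> forall x r, G' x r -> G x r.
Proof.
  destruct (@classical_sets.ZL_preorder GT (exist _ G0 good_G0) Rg) as [[G HG] Hmax].
  - intro t. apply ab_intro. auto.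
  - intros r s t H1 H2. apply ab_intro. intros x q H. apply ab_elim in H1. apply ab_elim in H2. auto.
  - intros A Htot. destruct (classic (exists s, A s)) as [[s0 Hs0]|Ne].
    + set (U := fun x r => exists s, A s /\ proj1_sig s x r).
      assert (Hc : forall s t, A s -> A t -> (forall x r, proj1_sig s x r -> proj1_sig t x r) \/
                                         (forall x r, proj1_sig t x r -> proj1_sig s x r)).
      { intros s t Hs Ht. destruct (Htot s t Hs Ht) as [E|E]; [left|right]; apply ab_elim; auto. }
      assert (HU : good U).
      { constructor.
        - intros x r q [s [Hs Hr]] [t [Ht Hq]].
          destruct (Hc s t Hs Ht) as [E|E].
          + apply (gfun (proj2_sig t) x); auto.
          + apply (gfun (proj2_sig s) x); auto.
        - intros x y r q [s [Hs Hr]] [t [Ht Hq]].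
          destruct (Hc s t Hs Ht) as [E|E].
          + exists t; split; auto. apply (gadd (proj2_sig t)); auto.
          + exists s; split; auto. apply (gadd (proj2_sig s)); auto.
        - intros a x r [s [Hs Hr]]. exists s; split; auto. apply (gsc (proj2_sig s)); auto.
        - intros x r [s [Hs Hr]]. apply (gdom (proj2_sig s) x r Hr).
        - exists s0; split; auto. apply (gz (proj2_sig s0)). }
      exists (exist _ U HU). intros s Hs. apply ab_intro. intros x r H. exists s; auto.
    + exists (exist _ G0 good_G0). intros s Hs. exfalso; eauto.
  - exists G. split; auto. intros G' HG' Hsub x r H.
    assert (E : Rg (exist _ G HG) (exist _ G' HG') = true) by (apply ab_intro; auto).
    apply Hmax in E. apply ab_elim in E. apply E; auto.
Qed.

Theorem HB_real : exists u : X -> R,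
  (forall x y, u (vadd x y) = u x + u y) /\
  (forall (a : RField) x, u (vscale a x) = a * u x) /\
  (forall x, u x <= vnorm x) /\ u z = vnorm z.
Proof.
  destruct max_graph as [G [HG Hmax]].
  assert (Dom : forall x, exists r, G x r).
  { intro y. destruct (classic (exists r, G y r)) as [H|H]; auto.
    exfalso. assert (Hy : forall r, ~ G y r) by (intros r Hr; apply H; eauto).
    destruct (extend HG y Hy) as [G' [HG' [Hsub [r Hr]]]].
    apply (Hy r). apply (Hmax G'); auto. }
  set (u := fun x => proj1_sig (constructive_indefinite_description _ (Dom x))).
  assert (Hu : forall x, G x (u x)).
  { intro x. unfold u. destruct (constructive_indefinite_description _ (Dom x)); auto. }
  exists u. split; [|split; [|split]].
  - intros x y. apply (gfun HG (vadd x y)); auto. apply (gadd HG); auto.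
  - intros a x. apply (gfun HG (vscale a x)); auto. apply (gsc HG); auto.
  - intro x. apply (gdom HG); auto.
  - apply (gfun HG z); auto. apply (gz HG).
Qed.
End HB.

Set Implicit Arguments.
Open Scope R_scope.

Section Realify.
Variable X : BanachSpace CField.

Definition rscale (a : sc RField) (x : X) : X := vscale ((a, 0) : sc CField) x.

Definition XR : BanachSpace RField.
Proof.
  refine (@Build_BanachSpace RField (vec X) (vzero X) (@vadd _ X) (@vopp _ X) rscale (@vnorm _ X) _ _ _ _ _ _ _ _ _ _ _ _).
  all: idtac.
  - apply vadd_assoc.
  - apply vadd_comm.
  - apply vadd_0.
  - apply vadd_opp.
  - intro x. unfold rscale. apply (vscale_1 X).
  - intros a b x. unfold rscale. rewrite vscale_assoc. f_equal. simpl. unfold Cmul; simpl.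
    apply pair_eq; ring.
  - intros a x y. unfold rscale. apply vscale_addv.
  - intros a b x. unfold rscale. rewrite <- vscale_adds. f_equal. simpl. unfold Cadd; simpl.
    apply pair_eq; ring.
  - apply vnorm_eq0.
  - apply vnorm_triangle.
  - intros a x. unfold rscale. rewrite vnorm_scale. f_equal. simpl. unfold Cabs; simpl.
    replace (a * a + 0 * 0) with (Rsqr a) by (unfold Rsqr; ring). apply sqrt_Rsqr_abs.
  - apply vcomplete.
Defined.
End Realify.

Lemma HB_abs (X : BanachSpace RField) (z : X) (Hz : z <> vzero X) :
  exists u : X -> R,
  (forall x y, u (vadd x y) = u x + u y) /\
  (forall (a : RField) x, u (vscale a x) = a * u x) /\
  (forall x, Rabs (u x) <= vnorm x) /\ u z = vnorm z.
Proof.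
  destruct (@HB_real _ _ Hz) as [u [H1 [H2 [H3 H4]]]]. exists u; repeat split; auto.
  intro x. assert (E := H3 (@vscale RField X (-1) x)). rewrite H2 in E.
  rewrite (vnorm_scale X) in E. simpl in E. replace (Rabs (-1)) with 1 in E by (symmetry; rewrite Rabs_left; lra).
  assert (F := H3 x). apply Rabs_le. lra.
Qed.

Lemma Cabs_le (p q : R) : Cabs (p, q) <= Rabs p + Rabs q.
Proof.
  unfold Cabs; simpl.
  rewrite <- (sqrt_Rsqr (Rabs p + Rabs q)) by (assert (0 <= Rabs p) by apply Rabs_pos;
    assert (0 <= Rabs q) by apply Rabs_pos; lra).
  apply sqrt_le_1_alt. unfold Rsqr.
  assert (p * p = Rabs p * Rabs p) by (rewrite <- Rabs_mult, Rabs_pos_eq; nra).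
  assert (q * q = Rabs q * Rabs q) by (rewrite <- Rabs_mult, Rabs_pos_eq; nra).
  assert (0 <= Rabs p) by apply Rabs_pos. assert (0 <= Rabs q) by apply Rabs_pos. nra.
Qed.

Lemma exists_f (K : ScalarField) (HK : K = RField \/ K = CField) (X : BanachSpace K)
  (z0 : X) (Hz0 : z0 <> vzero X) : exists f, bfun X f /\ f z0 <> szero K.
Proof.
  destruct HK; subst K.
  - destruct (@HB_abs _ _ Hz0) as [u [H1 [H2 [H3 H4]]]]. exists u. split; [split; [|split]|].
    + exact H1.
    + exact H2.
    + exists 1. intro x. simpl. rewrite Rmult_1_l. auto.
    + simpl. rewrite H4. intro E. apply Hz0. apply vnorm_eq0; auto.
  - set (Y := XR X).
    assert (Hz1 : (z0 : Y) <> vzero Y) by exact Hz0.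
    destruct (@HB_abs _ _ Hz1) as [u [H1 [H2 [H3 H4]]]].
    set (i := ((0, 1) : sc CField)).
    assert (US : forall (a : R) (x : X), u (vscale ((a, 0) : sc CField) x) = a * u x).
    { intros a x. exact (H2 a x). }
    assert (UA : forall x y : X, u (vadd x y) = u x + u y) by exact H1.
    assert (split_ : forall a1 a2 (x : X), vscale ((a1, a2) : sc CField) x =
        vadd (vscale ((a1, 0) : sc CField) x) (vscale ((a2, 0) : sc CField) (vscale i x))).
    { intros a1 a2 x. unfold i. rewrite vscale_assoc, <- vscale_adds. f_equal. simpl.
      unfold Cadd, Cmul; simpl. apply pair_eq; ring. }
    assert (ii : forall x : X, vscale i (vscale i x) = vscale ((-1, 0) : sc CField) x).
    { intro x. unfold i. rewrite vscale_assoc. f_equal. simpl. unfold Cmul; simpl.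
      apply pair_eq; ring. }
    assert (ic : forall (a : R) (x : X), vscale i (vscale ((a, 0) : sc CField) x) =
                                   vscale ((a, 0) : sc CField) (vscale i x)).
    { intros a x. unfold i. rewrite !vscale_assoc. f_equal. simpl. unfold Cmul; simpl.
      apply pair_eq; ring. }
    exists (fun x : X => ((u x, - u (vscale i x)) : sc CField)). split; [split; [|split]|].
    + intros x y. rewrite vscale_addv, !UA. simpl. unfold Cadd; simpl. apply pair_eq; ring.
    + intros [a1 a2] x. rewrite split_, vscale_addv, !ic, ii, !UA, !US. simpl. unfold Cmul; simpl.
      apply pair_eq; ring.
    + exists 2. intro x. simpl.
      apply Rle_trans with (Rabs (u x) + Rabs (- u (vscale i x))); [apply Cabs_le|].
      rewrite Rabs_Ropp.
      assert (E1 := H3 x). assert (E2 := H3 (vscale i x)).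
      simpl in E2. rewrite vnorm_scale in E2.
      replace (sabs CField i) with 1 in E2.
      * simpl in E1. lra.
      * unfold i. simpl. unfold Cabs; simpl. replace (0 * 0 + 1 * 1) with 1 by ring.
        symmetry; apply sqrt_1.
    + simpl. intro E. inversion E. apply Hz0. apply vnorm_eq0. simpl in H4. lra.
Qed.

Theorem corollary2p10 (K : ScalarField) (HK : K = RField \/ K = CField)
  (X : BanachSpace K) (A : op X -> Prop) (HA : unital_standard_algebra A)
  (phi : op X -> op X) (Hphi : linear_on A phi)
  (Hzp : forall S T, A S -> A T ->
     op_mul S T = op_zero X -> op_mul T S = op_zero X ->
     op_add (jordan (phi S) T) (jordan S (phi T)) = op_zero X) :
  (exists delta eta : op X -> op X,
     derivation_on A delta /\ multiplier_on A eta /\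
     forall T, A T -> phi T = op_add (delta T) (eta T)) /\
  (phi (op_id X) = op_zero X -> derivation_on A phi).
Proof.
  assert (HF : FF K) by (destruct HK; subst; [apply FF_R | apply FF_C]).
  destruct (classic (exists z0 : X, z0 <> vzero X)) as [[z0 Hz0]|Triv].
  - destruct (exists_f HK _ Hz0) as [f [Hf Hfz]].
    destruct (ff_inv HF Hfz) as [b Hb].
    assert (Hz : f (vscale b z0) = sone K).
    { destruct Hf as [_ [Hs _]]. rewrite Hs. exact Hb. }
    eapply main_generic; eauto.
  - assert (All : forall S T : op X, S = T).
    { intros S T. extensionality x.
      assert (E : forall y : X, y = vzero X).
      { intro y. destruct (classic (y = vzero X)); auto. exfalso; apply Triv; eauto. }
      rewrite (E (S x)), (E (T x)). auto. }
    assert (A0 : A (op_zero X)) by (destruct HA as (?&?&?); auto).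
    split.
    + exists (fun _ => op_zero X), phi. split; [|split].
      * split. split. intros T _; exact A0. split; intros; apply All. intros; apply All.
      * split. exact Hphi. intros; split; apply All.
      * intros; apply All.
    + intros _. split. exact Hphi. intros; apply All.
Qed.
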